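(* Let $\Lambda\in\mathcal H$ be of integral type and $\tilde\Lambda\in\mathcal H$ of $\Lambda$-integral type. Consider ${}_{\tilde\Lambda}\mathcal V$ as a right module over the algebra $\mathcal V_{\tilde\Lambda}$ via $x\cdot a=S(\pi(a))x$. Then ${}_{\tilde\Lambda}\mathcal V$ is a cyclic $\mathcal V_{\tilde\Lambda}$-module if and only if $1_{\mathcal H}\in\mathcal V_{\tilde\Lambda}$ and $\mathcal V_{\tilde\Lambda}$ is a Frobenius algebra.
   Context: $k$ is a field; $\mathcal H$ is a Hopf algebra over $k$ with comultiplication $\Delta$, counit $\varepsilon$, invertible antipode $S$, dual $\mathcal H'$. For $\Lambda\in\mathcal H$ put $\mathcal V_\Lambda=\{(\nu\otimes\mathrm{id})\Delta(\Lambda):\nu\in\mathcal H'\}$ and ${}_\Lambda\mathcal V=\{(\mathrm{id}\otimes\nu)\Delta(\Lambda):\nu\in\mathcal H'\}$. A non-zero $\Lambda$ is of integral type if $\Delta(\Lambda)(1\otimes\Lambda)=\Lambda\otimes\Lambda$; for such $\Lambda$, a non-zero $\tilde\Lambda$ is of $\Lambda$-integral type if $\Delta(\tilde\Lambda)(1\otimes\tilde\Lambda)=\Lambda\otimes\tilde\Lambda$. $\mathcal A_{\tilde\Lambda}=\{a\in\mathcal H:\ \Delta(a)(1\otimes\tilde\Lambda)=b\otimes\tilde\Lambda\text{ for some }b\}$; $b$ is unique, denoted $\pi(a)$, and $\pi:\mathcal A_{\tilde\Lambda}\to\mathcal H$ is an injective algebra homomorphism; $\mathcal V_{\tilde\Lambda}$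 is a subalgebra of $\mathcal A_{\tilde\Lambda}$. A right module $M$ over an algebra $\mathcal B$ is cyclic if there is $m\in M$ with $m\mathcal B=M$. A finite-dimensional unital algebra $\mathcal B$ is Frobenius if it admits a non-degenerate bilinear form $\sigma$ with $\sigma(ab,c)=\sigma(a,bc)$ for all $a,b,c$ (equivalently, it admits a faithful functional $\omega$, i.e. $\omega(ab)=0$ for all $b$ implies $a=0$). *)

(* Defs.v *)
From HB Require Import structures.
From mathcomp Require Import all_boot all_order all_algebra.
Set Implicit Arguments. Unset Strict Implicit. Unset Printing Implicit Defensive.
Import GRing.Theory.
Local Open Scope ring_scope.

(* Elements of H (x) H are represented by finite lists of pure tensors
   sum_i a_i (x) b_i; two representatives denote the same tensor iff all
   functionals nu (x) mu (nu, mu in the dual H') agree on them (over a field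
   the canonical map H(x)H -> (H' x H' -> k) is injective). Same for H(x)H(x)H. *)
Definition tens2 (H : Type) := seq (H * H).
Definition tens3 (H : Type) := seq (H * H * H).

Notation dual H := {scalar H}.

Section Hopf.
Variables (K : fieldType) (H : algType K).

Definition teq2 (t s : tens2 H) : Prop :=
  forall nu mu : dual H,
    \sum_(p <- t) nu p.1 * mu p.2 = \sum_(p <- s) nu p.1 * mu p.2.

Definition teq3 (t s : tens3 H) : Prop :=
  forall nu mu rho : dual H,
    \sum_(p <- t) nu p.1.1 * mu p.1.2 * rho p.2
    = \sum_(p <- s) nu p.1.1 * mu p.1.2 * rho p.2.

Definition tmul (t s : tens2 H) : tens2 H :=
  flatten [seq [seq (p.1 * q.1, p.2 * q.2) | q <- s] | p <- t].

Definition tscale (a : K) (t : tens2 H) : tens2 H :=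
  [seq (a *: p.1, p.2) | p <- t].

Definition lslice (nu : H -> K) (t : tens2 H) : H := \sum_(p <- t) nu p.1 *: p.2.
Definition rslice (nu : H -> K) (t : tens2 H) : H := \sum_(p <- t) nu p.2 *: p.1.

Record hopf := Hopf {
  cop : H -> tens2 H;
  counit : dual H;
  antipode : {linear H -> H};
  cop_linear : forall (a : K) (x y : H),
      teq2 (cop (a *: x + y)) (tscale a (cop x) ++ cop y);
  cop_mul : forall x y, teq2 (cop (x * y)) (tmul (cop x) (cop y));
  cop_one : teq2 (cop 1) [:: (1, 1)];
  coassoc : forall x,
      teq3 (flatten [seq [seq (q.1, q.2, p.2) | q <- cop p.1] | p <- cop x])
           (flatten [seq [seq (p.1, q.1, q.2) | q <- cop p.2] | p <- cop x]);
  counit_mul : forall x y, counit (x * y) = counit x * counit y;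
  counit_one : counit 1 = 1;
  counitL : forall x, lslice counit (cop x) = x;
  counitR : forall x, rslice counit (cop x) = x;
  antipodeL : forall x,
      \sum_(p <- cop x) antipode p.1 * p.2 = counit x *: 1;
  antipodeR : forall x,
      \sum_(p <- cop x) p.1 * antipode p.2 = counit x *: 1;
  antipode_bij : bijective antipode
}.

Variable h : hopf.

(* V_Lambda = { (nu (x) id) Delta(Lambda) : nu in H' } *)
Definition V_ (L : H) (x : H) : Prop := exists nu : dual H, x = lslice nu (cop h L).
(* _Lambda V = { (id (x) nu) Delta(Lambda) : nu in H' } *)
Definition V'_ (L : H) (x : H) : Prop := exists nu : dual H, x = rslice nu (cop h L).

Definition integral_type (L : H) : Prop :=
  L != 0 /\ teq2 (tmul (cop h L) [:: (1, L)]) [:: (L, L)].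

Definition Lintegral_type (L Lt : H) : Prop :=
  Lt != 0 /\ teq2 (tmul (cop h Lt) [:: (1, Lt)]) [:: (L, Lt)].

(* pi_rel Lt a b  <->  a \in A_Lt and pi(a) = b, i.e.
   Delta(a)(1 (x) Lt) = b (x) Lt *)
Definition pi_rel (Lt a b : H) : Prop :=
  teq2 (tmul (cop h a) [:: (1, Lt)]) [:: (b, Lt)].

Definition ract (Lt x a y : H) : Prop :=
  exists2 b, pi_rel Lt a b & y = antipode h b * x.

Definition cyclic_module (Lt : H) : Prop :=
  exists2 m, V'_ Lt m &
    forall x, V'_ Lt x <-> exists2 a, V_ Lt a & ract Lt m a x.

Definition fin_dim (B : H -> Prop) : Prop :=
  exists s : seq H, (forall y, y \in s -> B y) /\
    forall x, B x -> exists c : nat -> K, x = \sum_(i < size s) c i *: s`_i.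

Definition frobenius (B : H -> Prop) : Prop :=
  fin_dim B /\
  exists sigma : H -> H -> K,
    [/\ forall (k : K) a a' b, B a -> B a' -> B b ->
          sigma (k *: a + a') b = k * sigma a b + sigma a' b,
        forall (k : K) a b b', B a -> B b -> B b' ->
          sigma a (k *: b + b') = k * sigma a b + sigma a b',
        forall a b c, B a -> B b -> B c ->
          sigma (a * b) c = sigma a (b * c),
        forall a, B a -> (forall b, B b -> sigma a b = 0) -> a = 0
      & forall b, B b -> (forall a, B a -> sigma a b = 0) -> b = 0].

End Hopf.

(* Main.v *)
Require Import Defs.
From HB Require Import structures.
From mathcomp Require Import all_boot all_order all_algebra.
From mathcomp Require Import boolp classical_sets.
From mathcomp Require Import ring.
Import GRing.Theory.
Local Open Scope classical_set_scope.
Local Open Scope ring_scope.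

Section Z.
Variables (K : fieldType) (H : algType K).

Definition mkS (f : H -> K) (Hf : forall (a : K) x y, f (a *: x + y) = a * f x + f y) : {scalar H} :=
  HB.pack_for {scalar H} f (GRing.isLinear.Build K H K *%R f Hf).
Lemma mkSE f Hf x : @mkS f Hf x = f x. Proof. by []. Qed.

Definition subsp (X : set H) := X 0 /\ (forall (a : K) y z, X y -> X z -> X (a *: y + z)).

Lemma subspN X y : subsp X -> X y -> X (- y).
Proof. by move=> [X0 XD] Xy; rewrite -[- y]addr0 -scaleN1r; apply: XD. Qed.
Lemma subspD X y z : subsp X -> X y -> X z -> X (y + z).
Proof. by move=> [X0 XD] Xy Xz; rewrite -[y]scale1r; apply: XD. Qed.
Lemma subspZ X (a : K) y : subsp X -> X y -> X (a *: y).
Proof. by move=> [X0 XD] Xy; rewrite -[_ *: _]addr0; apply: XD. Qed.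

Lemma complement (W : set H) (x : H) : subsp W -> ~ W x ->
  exists g : {scalar H}, g x = 1 /\ forall y, W y -> g y = 0.
Proof.
move=> sW nWx.
pose P (X : set H) := X = set0 \/ (subsp X /\ W `<=` X /\ ~ X x).
have [|A [PA Amax]] := @Zorn_bigcup H P.
  move=> F FP Ftot.
  have [[X0 FX0 X0n]|allE] := pselect (exists2 X, F X & X != set0); last first.
    left; apply/seteqP; split => // y [X FX Xy]; apply: allE; exists X => //.
    by apply/set0P; exists y.
  have PX X y : F X -> X y -> subsp X /\ W `<=` X /\ ~ X x.
    move=> FX Xy; case: (FP X FX) => // XE; by rewrite XE in Xy.
  have [y X0y] := (set0P X0).1 X0n.
  right; split; [split|split].
  - by exists X0 => //; case: (PX X0 y FX0 X0y) => -[].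
  - move=> a u v [X1 FX1 X1u] [X2 FX2 X2v].
    case: (Ftot X1 X2 FX1 FX2) => S12.
      exists X2 => //; case: (PX X2 v FX2 X2v) => -[_ XD] _; apply: XD => //; exact: S12.
    exists X1 => //; case: (PX X1 u FX1 X1u) => -[_ XD] _; apply: XD => //; exact: S12.
  - by move=> w Ww; exists X0 => //; case: (PX X0 y FX0 X0y) => _ [+ _]; apply.
  - by move=> [X FX Xx]; case: (PX X x FX Xx) => _ [].
have [A0|[sA [WA nAx]]] := PA.
  exfalso; apply: (Amax W); last by right; split => //; split.
  rewrite A0; split => // /(_ 0) WO; apply: WO; by case: sW.
have key y : exists c : K, A (y - c *: x).
  have [Ay|nAy] := pselect (A y); first by exists 0; rewrite scale0r subr0.
  pose B := [set z | exists a m, A m /\ z = m + a *: y].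
  have sB : subsp B.
    split; first by exists 0, 0; split; [case: sA|rewrite scale0r addr0].
    move=> a u v [a1 [m1 [Am1 ->]]] [a2 [m2 [Am2 ->]]].
    exists (a * a1 + a2), (a *: m1 + m2); split; first by case: sA => _; apply.
    by rewrite scalerDr addrACA scalerA scalerDl.
  have AB : A `<=` B by move=> m Am; exists 0, m; rewrite scale0r addr0.
  have : ~ P B.
    apply: Amax; split => // /(_ y) BA; apply: nAy; apply: BA.
    by exists 1, 0; rewrite add0r scale1r; split => //; case: sA.
  move=> nPB.
  have Bx : B x.
    apply: contrapT => nBx; apply: nPB; right; split => //; split => //.
    by move=> w /WA /AB.
  case: Bx => a [m [Am xE]].
  have a0 : a != 0.
    by apply/negP => /eqP a0; apply: nAx; rewrite xE a0 scale0r addr0.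
  exists a^-1; rewrite xE scalerDr scalerA mulVf // scale1r opprD addrCA subrr addr0.
  by apply: subspN => //; apply: subspZ.
have uniq y c c' : A (y - c *: x) -> A (y - c' *: x) -> c = c'.
  move=> A1 A2; apply: contrapT => cc.
  have : A ((c' - c) *: x).
    have -> : (c' - c) *: x = (y - c *: x) + - (y - c' *: x).
      by rewrite opprD opprK addrACA subrr add0r scalerBl addrC.
    by apply: subspD => //; apply: subspN.
  move=> /(@subspZ A ((c' - c)^-1) _ sA); rewrite scalerA mulVf ?scale1r //.
  by rewrite subr_eq0; apply/eqP => h; apply: cc; rewrite h.
pose g y := projT1 (cid (key y)).
have gP y : A (y - g y *: x) := projT2 (cid (key y)).
have glin (a : K) y z : g (a *: y + z) = a * g y + g z.
  apply: (uniq (a *: y + z)) => //.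
  have -> : a *: y + z - (a * g y + g z) *: x = a *: (y - g y *: x) + (z - g z *: x).
    by rewrite scalerBr scalerA addrACA -opprD -scalerDl.
  by case: sA => _; apply.
exists (mkS _ glin); split.
  by rewrite mkSE; apply: (uniq x) => //; rewrite scale1r subrr; case: sA.
move=> w Ww; rewrite mkSE; apply: (uniq w) => //; rewrite scale0r subr0; exact: WA.
Qed.

Definition inspan (s : seq H) (x : H) :=
  exists c : nat -> K, x = \sum_(i < size s) c i *: s`_i.

Lemma subsp_span s : subsp (inspan s).
Proof.
split; first by exists (fun _ => 0); rewrite big1 // => i _; rewrite scale0r.
move=> a y z [c ->] [d ->]; exists (fun i => a * c i + d i).
rewrite scaler_sumr -big_split /=; apply: eq_bigr => i _.
by rewrite scalerA scalerDl.
Qed.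

Lemma inspan_mem s y : y \in s -> inspan s y.
Proof.
move=> ys; exists (fun i => (i == index y s)%:R).
have yi : (index y s < size s)%N by rewrite index_mem.
rewrite (bigD1 (Ordinal yi)) //=.
rewrite eqxx scale1r nth_index // big1 ?addr0 // => i /negbTE.
move=> ne; rewrite (_ : (nat_of_ord i == index y s) = false) ?scale0r //.
Qed.

Lemma inspan_cons x s y : inspan (x :: s) y ->
  exists a w, inspan s w /\ y = a *: x + w.
Proof.
move=> [c ->]; rewrite big_ord_recl /=.
exists (c 0%N), (\sum_(i < size s) c (bump 0 i) *: s`_i); split => //.
by exists (fun i => c i.+1).
Qed.

Lemma dualbasis (s : seq H) : exists n (e : 'I_n -> H) (f : 'I_n -> {scalar H}),
  [/\ forall i, e i \in s, forall i j, f i (e j) = (i == j)%:R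
    & forall x, inspan s x -> x = \sum_i f i x *: e i].
Proof.
elim: s => [|x s [n [e [f [es fe sp]]]]].
  have z0 : forall (a : K) (y z : H), (fun _ : H => (0 : K)) (a *: y + z) = a * (fun _ => 0) y + (fun _ => 0) z.
    by move=> *; rewrite mulr0 addr0.
  exists 0%N, (fun _ => 0), (fun _ => mkS _ z0); split; try by case.
  by move=> y [c ->]; rewrite !big_ord0.
have [xs|nxs] := pselect (inspan s x).
  exists n, e, f; split => //; first by move=> i; rewrite in_cons es orbT.
  move=> y /inspan_cons [a [w [ws ->]]]; apply: sp.
  by case: (subsp_span s) => _; apply.
have [g [gx gs]] := @complement (inspan s) x (subsp_span s) nxs.

have fl j : forall (a : K) (y z : H),
   (fun y => f j y - f j x * g y) (a *: y + z) =
   a * (fun y => f j y - f j x * g y) y + (fun y => f j y - f j x * g y) z.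
  by move=> a y z /=; rewrite !linearD !linearZ /=; ring.
pose e' (i : 'I_n.+1) := if unlift ord0 i is Some j then e j else x.
pose f' (i : 'I_n.+1) := if unlift ord0 i is Some j then mkS _ (fl j) else g.
have e'0 : e' ord0 = x by rewrite /e' unlift_none.
have e'S i : e' (lift ord0 i) = e i by rewrite /e' liftK.
have f'0 : f' ord0 = g by rewrite /f' unlift_none.
have f'S i y : f' (lift ord0 i) y = f i y - f i x * g y by rewrite /f' liftK.
have ge j : g (e j) = 0 by apply: gs; apply: inspan_mem.
exists n.+1, e', f'; split.
- move=> i; case: (unliftP ord0 i) => [j ->|->]; first by rewrite e'S in_cons es orbT.
  by rewrite e'0 mem_head.
- move=> i j.
  case: (unliftP ord0 i) => [i' ->|->]; case: (unliftP ord0 j) => [j' ->|->].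
  + by rewrite f'S e'S fe ge mulr0 subr0 (inj_eq (@lift_inj _ ord0)).
  + by rewrite f'S e'0 gx mulr1 subrr eq_sym (negbTE (neq_lift _ _)).
  + by rewrite f'0 e'S ge (negbTE (neq_lift _ _)).
  + by rewrite f'0 e'0 gx eqxx.
- move=> y /inspan_cons [a [w [ws ->]]].
  rewrite big_ord_recl f'0 e'0.
  have gy : g (a *: x + w) = a by rewrite linearD linearZ /= gx (gs _ ws) mulr1 addr0.
  rewrite gy; congr (_ + _); rewrite {1}(sp w ws); apply: eq_bigr => j _.
  by rewrite f'S e'S gy linearD linearZ /=; congr (_ *: _); ring.
Qed.

Lemma sepH (x y : H) : (forall f : {scalar H}, f x = f y) -> x = y.
Proof.
move=> fxy; apply/eqP; rewrite -subr_eq0; apply/negP => /negP nz.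
have nW : ~ inspan [::] (x - y).
  by move=> [c]; rewrite big_ord0 => /eqP; rewrite (negbTE nz).
have [g [g1 _]] := @complement (inspan [::]) (x - y) (subsp_span _) nW.
by move: g1; rewrite linearB /= fxy subrr => /eqP; rewrite eq_sym oner_eq0.
Qed.

Lemma decompF n (e : 'I_n -> H) (f : 'I_n -> {scalar H}) (F : H -> K)
  (Fl : forall (a : K) y z, F (a *: y + z) = a * F y + F z) u :
  u = \sum_i f i u *: e i -> F u = \sum_i f i u * F (e i).
Proof.
move=> hu; transitivity (mkS _ Fl (\sum_i f i u *: e i)); first by rewrite mkSE -hu.
by rewrite linear_sum; apply: eq_bigr => i _; rewrite linearZ.
Qed.

Definition bilin (G : H -> H -> K) :=
  (forall (a : K) u u' v, G (a *: u + u') v = a * G u v + G u' v) /\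
  (forall (a : K) u v v', G u (a *: v + v') = a * G u v + G u v').

Lemma ext2 (t s : tens2 H) (G : H -> H -> K) : bilin G -> teq2 t s ->
  \sum_(p <- t) G p.1 p.2 = \sum_(p <- s) G p.1 p.2.
Proof.
move=> [GL GR] ts.
have [n [e [f [_ _ sp]]]] := dualbasis ([seq p.1 | p <- t] ++ [seq p.1 | p <- s]).
have dec (r : tens2 H) : {subset [seq p.1 | p <- r] <= [seq p.1 | p <- t] ++ [seq p.1 | p <- s]} ->
   \sum_(p <- r) G p.1 p.2 = \sum_i \sum_(p <- r) f i p.1 * mkS _ (fun a v v' => GR a (e i) v v') p.2.
  move=> sub; rewrite exchange_big /=; apply: eq_big_seq => p pr.
  rewrite (@decompF n e f (G^~ p.2) (fun a u u' => GL a u u' p.2) p.1) //.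
  by apply: sp; apply: inspan_mem; apply: sub; apply: map_f.
rewrite !dec; first (apply: eq_bigr => i _; exact: ts).
- by move=> y yr; rewrite mem_cat yr orbT.
- by move=> y yr; rewrite mem_cat yr.
Qed.

Definition trilin (G : H -> H -> H -> K) :=
  [/\ (forall (a : K) u u' v w, G (a *: u + u') v w = a * G u v w + G u' v w),
      (forall (a : K) u v v' w, G u (a *: v + v') w = a * G u v w + G u v' w) &
      (forall (a : K) u v w w', G u v (a *: w + w') = a * G u v w + G u v w')].

Lemma ext3 (t s : tens3 H) (G : H -> H -> H -> K) : trilin G -> teq3 t s ->
  \sum_(p <- t) G p.1.1 p.1.2 p.2 = \sum_(p <- s) G p.1.1 p.1.2 p.2.
Proof.
move=> [G1 G2 G3] ts.
have [n [e [f [_ _ sp]]]] := dualbasis ([seq p.1.1 | p <- t] ++ [seq p.1.1 | p <- s]).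
have [m [e' [f' [_ _ sp']]]] := dualbasis ([seq p.1.2 | p <- t] ++ [seq p.1.2 | p <- s]).
have dec (r : tens3 H) : {subset [seq p.1.1 | p <- r] <= [seq p.1.1 | p <- t] ++ [seq p.1.1 | p <- s]} ->
   {subset [seq p.1.2 | p <- r] <= [seq p.1.2 | p <- t] ++ [seq p.1.2 | p <- s]} ->
   \sum_(p <- r) G p.1.1 p.1.2 p.2 =
   \sum_i \sum_j \sum_(p <- r) f i p.1.1 * f' j p.1.2 * mkS _ (fun a w w' => G3 a (e i) (e' j) w w') p.2.
  move=> sub1 sub2.
  transitivity (\sum_(p <- r) \sum_i \sum_j f i p.1.1 * f' j p.1.2 * mkS _ (fun a w w' => G3 a (e i) (e' j) w w') p.2); last first.
    by rewrite exchange_big; apply: eq_bigr => i _; rewrite exchange_big.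
  apply: eq_big_seq => p pr.
  rewrite (@decompF n e f (fun u => G u p.1.2 p.2) (fun a u u' => G1 a u u' p.1.2 p.2) p.1.1); last first.
    by apply: sp; apply: inspan_mem; apply: sub1; apply: map_f.
  apply: eq_bigr => i _.
  rewrite (@decompF m e' f' (fun v => G (e i) v p.2) (fun a v v' => G2 a (e i) v v' p.2) p.1.2); last first.
    by apply: sp'; apply: inspan_mem; apply: sub2; apply: map_f.
  rewrite mulr_sumr; apply: eq_bigr => j _; by rewrite mkSE mulrA.
rewrite !dec; first (apply: eq_bigr => i _; apply: eq_bigr => j _; exact: ts).
- by move=> y yr; rewrite mem_cat yr orbT.
- by move=> y yr; rewrite mem_cat yr orbT.
- by move=> y yr; rewrite mem_cat yr.
- by move=> y yr; rewrite mem_cat yr.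
Qed.

Section LA.
Variables (B : H -> Prop) (sigma : H -> H -> K).
Hypothesis sB : subsp B.
Hypothesis linL : forall (k : K) a a' b, B a -> B a' -> B b ->
          sigma (k *: a + a') b = k * sigma a b + sigma a' b.
Hypothesis linR : forall (k : K) a b b', B a -> B b -> B b' ->
          sigma a (k *: b + b') = k * sigma a b + sigma a b'.
Variables (n : nat) (e : 'I_n -> H) (f : 'I_n -> {scalar H}).
Hypothesis eB : forall i, B (e i).
Hypothesis fe : forall i j, f i (e j) = (i == j)%:R.
Hypothesis spB : forall v, B v -> v = \sum_i f i v *: e i.

Lemma xxx0 (x : K) : x = 1 * x + x -> x = 0.
Proof. by rewrite mul1r => h; apply: (@addrI _ x); rewrite addr0 -h. Qed.

Lemma sumB (c : 'I_n -> K) : B (\sum_i c i *: e i).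
Proof.
apply: (big_rec (fun x => B x)); first by case: sB.
by move=> i x _ Bx; case: sB => _; apply.
Qed.

Lemma sumL (c : 'I_n -> K) w : B w ->
  B (\sum_i c i *: e i) /\ sigma (\sum_i c i *: e i) w = \sum_i c i * sigma (e i) w.
Proof.
move=> Bw; apply: (big_rec2 (fun x y => B x /\ sigma x w = y)).
  split; first by case: sB.
  apply: xxx0; rewrite -linL ?scale1r ?addr0 //; by case: sB.
move=> i x y _ [Bx <-]; split; first by case: sB => _; apply.
by rewrite linL.
Qed.

Lemma sumR (c : 'I_n -> K) w : B w ->
  B (\sum_i c i *: e i) /\ sigma w (\sum_i c i *: e i) = \sum_i c i * sigma w (e i).
Proof.
move=> Bw; apply: (big_rec2 (fun x y => B x /\ sigma w x = y)).
  split; first by case: sB.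
  apply: xxx0; rewrite -linR ?scale1r ?addr0 //; by case: sB.
move=> i x y _ [Bx <-]; split; first by case: sB => _; apply.
by rewrite linR.
Qed.

Lemma f_sum (c : 'I_n -> K) i : f i (\sum_j c j *: e j) = c i.
Proof.
rewrite linear_sum (bigD1 i) //= big1 ?addr0.
  by rewrite linearZ /= fe eqxx mulr1.
by move=> j /negbTE ji; rewrite linearZ /= fe eq_sym ji mulr0.
Qed.

Definition Gram : 'M[K]_n := \matrix_(i, j) sigma (e i) (e j).

Lemma LA_solve : Gram \in unitmx -> forall t : 'rV[K]_n,
  exists a, B a /\ forall j, sigma a (e j) = t 0 j.
Proof.
move=> uM t; pose c := t *m invmx Gram.
exists (\sum_i c 0 i *: e i); split; first exact: sumB.
move=> j; case: (sumL (fun i => c 0 i) _ (eB j)) => _ ->.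
have : (c *m Gram) 0 j = t 0 j by rewrite mulmxKV.
by move=> <-; rewrite [RHS]mxE; apply: eq_bigr => i _; rewrite [Gram _ _]mxE.
Qed.

Lemma LA_left : Gram \in unitmx -> forall a, B a -> (forall b, B b -> sigma a b = 0) -> a = 0.
Proof.
move=> uM a Ba h; pose v := \row_i f i a.
have v0 : v *m Gram = 0.
  apply/rowP => j; rewrite [LHS]mxE [RHS]mxE.
  transitivity (sigma a (e j)); last exact: h.
  rewrite [in RHS](spB _ Ba).
  case: (sumL (fun i => f i a) _ (eB j)) => _ ->.
  by apply: eq_bigr => i _; rewrite !mxE.
have : v = 0 by rewrite -(mulmxK uM v) v0 mul0mx.
move=> /rowP vE; rewrite (spB _ Ba) big1 // => i _.
by have := vE i; rewrite !mxE => ->; rewrite scale0r.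
Qed.

Lemma LA_right : Gram \in unitmx -> forall b, B b -> (forall a, B a -> sigma a b = 0) -> b = 0.
Proof.
move=> uM b Bb h; pose w := \col_i f i b.
have w0 : Gram *m w = 0.
  apply/colP => i; rewrite [LHS]mxE [RHS]mxE.
  transitivity (sigma (e i) b); last exact: h.
  rewrite [in RHS](spB _ Bb).
  case: (sumR (fun j => f j b) _ (eB i)) => _ ->.
  by apply: eq_bigr => j _; rewrite !mxE mulrC.
have : w = 0 by rewrite -(mulKmx uM w) w0 mulmx0.
move=> /colP wE; rewrite (spB _ Bb) big1 // => i _.
by have := wE i; rewrite !mxE => ->; rewrite scale0r.
Qed.

Lemma LA_unit_nd : (forall a, B a -> (forall b, B b -> sigma a b = 0) -> a = 0) ->
  Gram \in unitmx.
Proof.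
move=> nd; rewrite unitmxE unitfE; apply/negP => /det0P [v vn0 v0].
pose a := \sum_i v 0 i *: e i.
have Ba : B a by exact: sumB.
have a0 : a = 0.
  apply: nd => // b Bb; rewrite (spB _ Bb).
  case: (sumR (fun j => f j b) _ Ba) => _ ->; rewrite big1 // => j _.
  case: (sumL (fun i => v 0 i) _ (eB j)) => _ ->.
  have := congr1 (fun m : 'M[K]_(1, n) => m 0 j) v0; rewrite !mxE => h.
  rewrite (_ : \sum_i _ = 0) ?mulr0 // -[RHS]h; apply: eq_bigr => i _; by rewrite mxE.
move: vn0; rewrite (_ : v = 0) ?eqxx //; apply/rowP => i.
by rewrite -(f_sum (fun i => v 0 i) i) -/a a0 linear0 mxE.
Qed.

Lemma LA_unit_inv : (forall k, exists a, B a /\ forall v, B v -> sigma a v = f k v) ->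
  Gram \in unitmx.
Proof.
move=> /choice [a aP].
pose C : 'M[K]_n := \matrix_(k, i) f i (a k).
suff : C *m Gram = 1%:M by case/mulmx1_unit.
apply/matrixP => k j; rewrite !mxE.
have [Bak aPk] := aP k.
rewrite -fe -(aPk _ (eB j)) [in RHS](spB _ Bak).
case: (sumL (fun i => f i (a k)) _ (eB j)) => _ ->.
by apply: eq_bigr => i _; rewrite !mxE.
Qed.

End LA.
Variable (h : hopf H).
Local Notation cop := (cop h).
Local Notation eps := (counit h).
Local Notation S := (antipode h).

Lemma sum_tmul1 (t : tens2 H) a b (F : H * H -> K) :
  \sum_(p <- tmul t [:: (a, b)]) F p = \sum_(p <- t) F (p.1 * a, p.2 * b).
Proof. by rewrite /tmul big_flatten /= big_map; apply: eq_bigr => p _; rewrite big_seq1. Qed.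

Lemma sum_tmul (t s : tens2 H) (F : H * H -> K) :
  \sum_(p <- tmul t s) F p = \sum_(p <- t) \sum_(q <- s) F (p.1 * q.1, p.2 * q.2).
Proof. by rewrite /tmul big_flatten /= big_map; apply: eq_bigr => p _; rewrite big_map. Qed.

Lemma sum_flat (A B : Type) (t : seq A) (g : A -> seq B) (F : B -> K) :
  \sum_(x <- flatten [seq g p | p <- t]) F x = \sum_(p <- t) \sum_(x <- g p) F x.
Proof. by rewrite big_flatten big_map. Qed.

Lemma pair_l (nu mu : {scalar H}) (t : tens2 H) :
  mu (lslice nu t) = \sum_(p <- t) nu p.1 * mu p.2.
Proof. by rewrite /lslice linear_sum; apply: eq_bigr => p _; rewrite linearZ. Qed.

Lemma pair_r (nu mu : {scalar H}) (t : tens2 H) :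
  nu (rslice mu t) = \sum_(p <- t) nu p.1 * mu p.2.
Proof. by rewrite /rslice linear_sum; apply: eq_bigr => p _; rewrite linearZ /= mulrC. Qed.

Lemma bilin0 G : bilin G -> forall v, G 0 v = 0.
Proof. by move=> [GL _] v; apply: xxx0; rewrite -GL scale1r addr0. Qed.

Lemma bilinZ G : bilin G -> forall (a : K) u v, G (a *: u) v = a * G u v.
Proof. by move=> hG a u v; rewrite -[a *: u]addr0 (hG.1) bilin0 // addr0. Qed.

Lemma bilin_prod (nu mu : {scalar H}) : bilin (fun u v => nu u * mu v).
Proof.
split => a u u' v /=; rewrite !linearD !linearZ /=; ring.
Qed.

Definition Phi (G : H -> H -> K) y := \sum_(q <- cop y) G q.1 q.2.

Lemma copL G : bilin G -> forall (a : K) y z, Phi G (a *: y + z) = a * Phi G y + Phi G z.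
Proof.
move=> hG a y z; rewrite /Phi (ext2 _ _ _ hG (cop_linear h a y z)) big_cat /= /tscale big_map.
by rewrite mulr_sumr; congr (_ + _); apply: eq_bigr => q _; rewrite bilinZ.
Qed.

Definition PhiS G (hG : bilin G) : {scalar H} := mkS _ (copL G hG).

Lemma Phi_lslice G (hG : bilin G) (nu : {scalar H}) (t : tens2 H) :
  Phi G (lslice nu t) = \sum_(p <- t) nu p.1 * Phi G p.2.
Proof.
rewrite -[Phi G _]/(PhiS G hG (lslice nu t)) /lslice linear_sum.
by apply: eq_bigr => p _; rewrite linearZ.
Qed.

Lemma coassoc' x (n1 n2 n3 : {scalar H}) :
  \sum_(p <- cop x) \sum_(q <- cop p.1) n1 q.1 * n2 q.2 * n3 p.2 =
  \sum_(p <- cop x) \sum_(q <- cop p.2) n1 p.1 * n2 q.1 * n3 q.2.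
Proof.
have := coassoc h x n1 n2 n3; rewrite !sum_flat.
by under eq_bigr do rewrite big_map; under [RHS]eq_bigr do rewrite big_map.
Qed.

Lemma coassoc3 x G : trilin G ->
  \sum_(p <- cop x) \sum_(q <- cop p.1) G q.1 q.2 p.2 =
  \sum_(p <- cop x) \sum_(q <- cop p.2) G p.1 q.1 q.2.
Proof.
move=> hG; have := ext3 _ _ _ hG (coassoc h x); rewrite !sum_flat.
by under eq_bigr do rewrite big_map; under [RHS]eq_bigr do rewrite big_map.
Qed.


Lemma basis_of_fd (B : H -> Prop) : fin_dim B -> exists n (e : 'I_n -> H) (f : 'I_n -> {scalar H}),
  [/\ forall i, B (e i), forall i j, f i (e j) = (i == j)%:R & forall v, B v -> v = \sum_i f i v *: e i].
Proof.
move=> [s [sB spB]]; have [n [e [f [es fe sp]]]] := dualbasis s.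
by exists n, e, f; split => // [i|v /spB /sp //]; apply: sB.
Qed.


Section Facts.
Variables (L Lt : H).
Local Notation T := (cop Lt).

Definition rmulS (c : H) (nu : {scalar H}) : {scalar H}.
Proof.
refine (mkS (fun y => nu (y * c)) _).
by move=> a x y; rewrite mulrDl -scalerAl linearD linearZ.
Defined.

Definition lmulS (c : H) (nu : {scalar H}) : {scalar H}.
Proof.
refine (mkS (fun y => nu (c * y)) _).
by move=> a x y; rewrite mulrDr -scalerAr linearD linearZ.
Defined.

Lemma piA (Lint : Lintegral_type h L Lt) (nu : {scalar H}) :
  pi_rel h Lt (lslice nu T) (lslice nu (cop L)).
Proof.
move=> n1 n2; rewrite sum_tmul1 big_seq1 /=.
under eq_bigr do rewrite mulr1.
pose rho := rmulS Lt n2.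
have -> : \sum_(p <- cop (lslice nu T)) n1 p.1 * n2 (p.2 * Lt) =
          Phi (fun u v => n1 u * rho v) (lslice nu T) by [].
rewrite Phi_lslice; last exact: bilin_prod.
under eq_bigr do rewrite /Phi mulr_sumr.
under eq_bigr do under eq_bigr do rewrite mulrA.
rewrite -(coassoc' Lt nu n1 rho).
pose Psi := PhiS _ (bilin_prod nu n1).
have := Lint.2 Psi n2; rewrite sum_tmul1 big_seq1 /= => h2.
transitivity (\sum_(p <- T) Psi p.1 * n2 (p.2 * Lt)).
  apply: eq_bigr => p _; rewrite /Psi /PhiS mkSE /Phi mulr_suml.
  by apply: eq_bigr => q _.
move: h2; under eq_bigr do rewrite mulr1; move=> ->.
rewrite /Psi /PhiS /= /Phi pair_l.
done.
Qed.


Lemma bilin_S (nu mu : {scalar H}) : bilin (fun u v => Phi (fun x y => nu (S u * x) * mu y) v).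
Proof.
split.
  move=> a u u' v; rewrite /Phi mulr_sumr -big_split; apply: eq_bigr => q _ /=.
  by rewrite linearD linearZ /= mulrDl -scalerAl linearD linearZ /=; ring.
move=> a u v v'; apply: copL; exact: (bilin_prod (lmulS (S u) nu) mu).
Qed.

Lemma trilin_F (nu mu : {scalar H}) :
  trilin (fun x y z => \sum_(p <- T) nu (S x * (y * p.1)) * mu (z * p.2)).
Proof.
split.
- move=> a u u' v w; rewrite mulr_sumr -big_split; apply: eq_bigr => p _ /=.
  by rewrite linearD linearZ /= mulrDl -scalerAl linearD linearZ /=; ring.
- move=> a u v v' w; rewrite mulr_sumr -big_split; apply: eq_bigr => p _ /=.
  by rewrite mulrDl mulrDr -scalerAl -scalerAr linearD linearZ /=; ring.
- move=> a u v w w'; rewrite mulr_sumr -big_split; apply: eq_bigr => p _ /=.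
  by rewrite mulrDl -scalerAl linearD linearZ /=; ring.
Qed.

Lemma actC a b : pi_rel h Lt a b -> forall nu mu : {scalar H},
  \sum_(p <- T) nu (S b * p.1) * mu p.2 = \sum_(p <- T) nu p.1 * mu (a * p.2).
Proof.
move=> pab nu mu.
pose G1 := fun u v => Phi (fun x y => nu (S u * x) * mu y) v.
have e1 := ext2 _ _ G1 (bilin_S nu mu) pab.
rewrite sum_tmul1 big_seq1 /= in e1.
move: e1; under eq_bigr do rewrite mulr1; move=> e1.
rewrite -[LHS]/(G1 b Lt) -e1 /G1 /Phi.
transitivity (\sum_(q <- cop a) \sum_(s <- cop q.2)
   (fun x y z => \sum_(p <- T) nu (S x * (y * p.1)) * mu (z * p.2)) q.1 s.1 s.2).
  apply: eq_bigr => q _.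
  have := cop_mul h q.2 Lt (lmulS (S q.1) nu) mu.
  by rewrite sum_tmul /= => ->.
rewrite -(coassoc3 a (fun x y z => \sum_(p <- T) nu (S x * (y * p.1)) * mu (z * p.2))); last exact: trilin_F.
transitivity (\sum_(q <- cop a) \sum_(p <- T) eps q.1 * nu p.1 * mu (q.2 * p.2)).
  apply: eq_bigr => q _; rewrite /= exchange_big /=; apply: eq_bigr => p _.
  rewrite -mulr_suml; congr (_ * _).
  have := antipodeL h q.1 => /(congr1 (fun z => nu (z * p.1))).
  rewrite mulr_suml linear_sum -scalerAl mul1r linearZ /= => <-.
  by apply: eq_bigr => s _; rewrite mulrA.
rewrite exchange_big /=; apply: eq_bigr => p _.
rewrite -{2}(counitL h a) /lslice mulr_suml linear_sum mulr_sumr.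
apply: eq_bigr => q _; rewrite -scalerAl linearZ /=; ring.
Qed.


Lemma actS a b (mu : {scalar H}) : pi_rel h Lt a b ->
  S b * rslice mu T = rslice (lmulS a mu) T.
Proof.
move=> pab; apply: sepH => nu; rewrite pair_r -(actC _ _ pab) /rslice mulr_sumr linear_sum.
by apply: eq_bigr => p _; rewrite -scalerAr linearZ /= mulrC.
Qed.

Definition zeroS : {scalar H}.
Proof. refine (mkS (fun _ => 0) _); by move=> *; rewrite mulr0 addr0. Defined.

Definition combS (k : K) (n1 n2 : {scalar H}) : {scalar H}.
Proof.
refine (mkS (fun y => k * n1 y + n2 y) _).
by move=> a x y; rewrite !linearD !linearZ /=; ring.
Defined.

Lemma subspV : subsp (V_ h Lt).
Proof.
split; first by exists zeroS; rewrite /lslice big1 // => p _; rewrite scale0r.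
move=> k y z [n1 ->] [n2 ->]; exists (combS k n1 n2).
rewrite /lslice scaler_sumr -big_split; apply: eq_bigr => p _ /=.
by rewrite scalerA scalerDl.
Qed.

Lemma mulV (Lint : Lintegral_type h L Lt) x y : V_ h Lt x -> V_ h Lt y -> V_ h Lt (x * y).
Proof.
move=> [n0 ->] [n1 ->]; have pab := piA Lint n0.
exists (lmulS (S (lslice n0 (cop L))) n1); apply: sepH => mu.
transitivity (\sum_(p <- T) n1 (S (lslice n0 (cop L)) * p.1) * mu p.2).
  rewrite (actC _ _ pab) [lslice n1 T]/lslice mulr_sumr linear_sum.
  by apply: eq_bigr => p _; rewrite -scalerAr linearZ.
by rewrite pair_l.
Qed.

Lemma pairlr (nu mu : {scalar H}) : mu (lslice nu T) = nu (rslice mu T).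
Proof. by rewrite pair_l pair_r. Qed.

Lemma cop_slice (n0 nu : {scalar H}) :
  lslice nu (cop (lslice n0 T)) = lslice (PhiS _ (bilin_prod n0 nu)) T.
Proof.
apply: sepH => mu; rewrite pair_l pair_l.
rewrite -[LHS]/(Phi (fun u v => nu u * mu v) (lslice n0 T)) Phi_lslice; last exact: bilin_prod.
under eq_bigr do rewrite /Phi mulr_sumr.
under eq_bigr do under eq_bigr do rewrite mulrA.
rewrite -(coassoc' Lt n0 nu mu); apply: eq_bigr => p _.
by rewrite /PhiS /= /Phi mulr_suml.
Qed.


Lemma subspB X y z : subsp X -> X y -> X z -> X (y - z).
Proof. by move=> sX Xy Xz; apply: subspD => //; apply: subspN. Qed.

Lemma seq_sum n (F : 'I_n -> H) (d : 'I_n -> K) : exists c : nat -> K,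
  \sum_i d i *: F i = \sum_(i < size [seq F j | j <- enum 'I_n]) c i *: [seq F j | j <- enum 'I_n]`_i.
Proof.
exists (fun k => if @insub nat (fun k => (k < n)%N) 'I_n k is Some i then d i else 0).
rewrite size_map size_enum_ord; apply: eq_bigr => i _.
by rewrite (nth_map i) ?size_enum_ord // nth_ord_enum valK.
Qed.

Lemma scalP (nu : {scalar H}) (a : K) y z : nu (a *: y + z) = a * nu y + nu z.
Proof. by rewrite linearD linearZ. Qed.

Lemma finV : fin_dim (V_ h Lt).
Proof.
have [n [e [f [_ _ sp]]]] := dualbasis [seq p.1 | p <- T].
exists [seq lslice (f i) T | i <- enum 'I_n]; split.
  by move=> y /mapP [i _ ->]; exists (f i).
move=> x [nu ->].
have -> : lslice nu T = \sum_i nu (e i) *: lslice (f i) T.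
  rewrite /lslice; under [RHS]eq_bigr do rewrite scaler_sumr.
  rewrite exchange_big /=; apply: eq_big_seq => p pT.
  rewrite (@decompF n e f nu (scalP nu) p.1); last first.
    by apply: sp; apply: inspan_mem; apply: map_f.
  by rewrite scaler_suml; apply: eq_bigr => i _; rewrite scalerA mulrC.
exact: seq_sum.
Qed.


Lemma dir2 (Lint : Lintegral_type h L Lt) :
  V_ h Lt 1 -> frobenius (V_ h Lt) -> cyclic_module h Lt.
Proof.
move=> V1 [fd [sig [linL linR assoc ndL ndR]]].
have [n [e [f [eV fe spV]]]] := basis_of_fd _ fd.
have sV := subspV.
have uM : Gram sig _ e \in unitmx by eapply LA_unit_nd; eassumption.
have oml (a : K) y z : (fun y => \sum_j f j y * sig 1 (e j)) (a *: y + z) =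
   a * (fun y => \sum_j f j y * sig 1 (e j)) y + (fun y => \sum_j f j y * sig 1 (e j)) z.
  rewrite /= mulr_sumr -big_split; apply: eq_bigr => j _ /=.
  by rewrite linearD linearZ /=; ring.
pose om := mkS _ oml.
have omP v : V_ h Lt v -> om v = sig 1 v.
  move=> Vv; rewrite /om /= [in RHS](spV _ Vv).
  have [_ ->] : V_ h Lt (\sum_j f j v *: e j) /\ sig 1 (\sum_j f j v *: e j) = \sum_j f j v * sig 1 (e j).
    by eapply sumR; eassumption.
  done.
exists (rslice om T); first by exists om.
move=> x; split.
- move=> [mu ->].
  have [a [Va aP]] : exists a, V_ h Lt a /\ forall j, sig a (e j) = (\row_j mu (e j)) 0 j.
    by eapply LA_solve; eassumption.
  have sigP v : V_ h Lt v -> sig a v = mu v.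
    move=> Vv; rewrite [in LHS](spV _ Vv).
    have [_ ->] : V_ h Lt (\sum_j f j v *: e j) /\ sig a (\sum_j f j v *: e j) = \sum_j f j v * sig a (e j).
      by eapply sumR; eassumption.
    rewrite [in RHS](spV _ Vv) linear_sum; apply: eq_bigr => j _.
    by rewrite aP mxE linearZ.
  exists a => //; have [nu0 aE] := Va.
  exists (lslice nu0 (cop L)); first by rewrite aE; exact: piA.
  rewrite (actS _ _ _ (_ : pi_rel h Lt a (lslice nu0 (cop L)))); last by rewrite aE; exact: piA.
  apply: sepH => nu; rewrite -!pairlr.
  have Vv : V_ h Lt (lslice nu T) by exists nu.
  symmetry; transitivity (om (a * lslice nu T)); first by [].
  rewrite omP; last by apply: mulV.
  by rewrite -assoc ?mul1r ?sigP.
- move=> [a Va [b pab ->]]; rewrite (actS _ _ _ pab); by exists (lmulS a om).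
Qed.

Lemma dir1 (Lint : Lintegral_type h L Lt) :
  cyclic_module h Lt -> V_ h Lt 1 /\ frobenius (V_ h Lt).
Proof.
move=> [m [mu0 mE] cyc]; subst m.
have sV := subspV.
have surj (mu : {scalar H}) : exists a, V_ h Lt a /\ forall v, V_ h Lt v -> mu v = mu0 (a * v).
  have [a Va [b pab xE]] := (cyc (rslice mu T)).1 (ex_intro _ mu erefl).
  exists a; split => // v [nu ->].
  by rewrite pairlr xE (actS _ _ _ pab) -pairlr.
have [n [e [f [eV fe spV]]]] := basis_of_fd _ finV.
pose sig u v := mu0 (u * v).
have linL (k : K) a a' b : V_ h Lt a -> V_ h Lt a' -> V_ h Lt b ->
    sig (k *: a + a') b = k * sig a b + sig a' b.
  by move=> _ _ _; rewrite /sig mulrDl -scalerAl linearD linearZ.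
have linR (k : K) a b b' : V_ h Lt a -> V_ h Lt b -> V_ h Lt b' ->
    sig a (k *: b + b') = k * sig a b + sig a b'.
  by move=> _ _ _; rewrite /sig mulrDr -scalerAr linearD linearZ.
have uM : Gram sig _ e \in unitmx.
  eapply LA_unit_inv; try eassumption.
  move=> k; have [a [Va aP]] := surj (f k); exists a; split => // v Vv.
  by rewrite aP.
have ndL : forall a, V_ h Lt a -> (forall b, V_ h Lt b -> sig a b = 0) -> a = 0.
  by eapply LA_left; eassumption.
have ndR : forall b, V_ h Lt b -> (forall a, V_ h Lt a -> sig a b = 0) -> b = 0.
  by eapply LA_right; eassumption.
have [e0 [Ve0 e0P]] := surj mu0.
have eL a : V_ h Lt a -> e0 * a = a.
  move=> Va; apply/eqP; rewrite -subr_eq0; apply/eqP; apply: ndL.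
    by apply: subspB => //; apply: mulV.
  move=> b Vb; rewrite /sig mulrBl linearB /= -mulrA -(e0P (a * b)) ?subrr //.
  exact: mulV.
have eR a : V_ h Lt a -> a * e0 = a.
  move=> Va; apply/eqP; rewrite -subr_eq0; apply/eqP; apply: ndL.
    by apply: subspB => //; apply: mulV.
  by move=> b Vb; rewrite /sig mulrBl linearB /= -mulrA eL ?subrr.
have [nu nuL] : exists nu : {scalar H}, nu Lt != 0.
  apply: contrapT => hn; move: Lint.1; rewrite (@sepH Lt 0) ?eqxx // => nu.
  rewrite linear0; apply: contrapT => hh; apply: hn; exists nu; apply/eqP => h0.
  by apply: hh.
have epsv : eps (lslice nu T) = nu Lt by rewrite pairlr counitR.
have eps1 : eps e0 = 1.
  have := congr1 eps (eL _ (ex_intro _ nu erefl)).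
  rewrite counit_mul epsv => /eqP; rewrite -{2}[nu Lt]mul1r.
  by move/eqP/(mulIf nuL).
have e01 : e0 = 1.
  have [nu0 e0E] := Ve0.
  have t2 : teq2 (tmul (cop e0) [:: (1, e0)]) (cop e0).
    move=> n1 n2; rewrite sum_tmul1.
    under eq_bigr do rewrite mulr1.
    rewrite -pair_l; rewrite -[in RHS](eR (lslice n1 (cop e0))).
      rewrite /lslice mulr_suml linear_sum; apply: eq_bigr => q _.
      by rewrite -scalerAl linearZ.
    by rewrite e0E cop_slice; eexists.
  apply: sepH => lam.
  have bG : bilin (fun u v => lam (S u * v)).
    split => a u u' v; first by rewrite linearD linearZ mulrDl -scalerAl linearD linearZ.
    by rewrite mulrDr -scalerAr linearD linearZ.
  have := ext2 _ _ _ bG t2; rewrite sum_tmul1 /=.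
  under eq_bigr do rewrite mulr1 mulrA.
  rewrite -linear_sum -mulr_suml -linear_sum antipodeL eps1 scale1r mul1r.
  by move=> ->.
split; first by rewrite -e01.
split; first exact: finV.
exists sig; split => //; first by move=> a b c _ _ _; rewrite /sig mulrA.
Qed.

End Facts.
End Z.

Theorem mainTheorem5 (K : fieldType) (H : algType K) (h : hopf H) (L Lt : H) :
  integral_type h L -> Lintegral_type h L Lt ->
  (cyclic_module h Lt <-> (V_ h Lt 1 /\ frobenius (V_ h Lt))).
Proof.
move=> _ Lint; split.
  exact: (@dir1 K H h L Lt Lint).
by case; apply: (@dir2 K H h L Lt Lint).
Qed.
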